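(* Let $f\in\Gamma_0(X)$ and let $x\in X$ be a minimizer of $f$. Then for every $M\ge 0$, \[ \partial f(x)=\bigcap_{\varepsilon>0}\overline{\operatorname{co}}\big(\partial_\varepsilon f(x)\cup \varepsilon\,\partial_{\varepsilon+M}f(x)\big)=\bigcap_{\varepsilon>0}\overline{\operatorname{co}}\big(\partial_\varepsilon f(x)\cup \varepsilon\,\partial_{\varepsilon+M}f^+(x)\big), \] where $f^+:=\max\{f,0\}$.
   Context: $X$ is a real separated (Hausdorff) locally convex space, with topological dual $X^*$ endowed with the weak$^*$ topology; closures and closed convex hulls $\overline{\operatorname{co}}$ in $X^*$ are taken in the weak$^*$ topology. $\Gamma_0(X)$ denotes the set of proper, convex, lower semicontinuous functions $X\to\mathbb{R}\cup\{+\infty\}$. For $g:X\to\overline{\mathbb{R}}$, $x\in X$ and $\varepsilon\in\mathbb{R}$, the $\varepsilon$-subdifferential is $\partial_\varepsilon g(x)=\{x^*\in X^*:\ g(y)\ge g(x)+\langle x^*,y-x\rangle-\varepsilon\ \forall y\in X\}$ if $g(x)\in\mathbb{R}$ and $\varepsilon\ge0$, and $\partial_\varepsilon g(x)=\emptyset$ otherwise; $\partial g(x):=\partial_0 g(x)$. For $\lambda\in\mathbb{R}$ and a set $A$, $\lambda A=\{\lambda a: a\in A\}$. *)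

(* Defs.v *)
From HB Require Import structures.
From mathcomp Require Import all_boot all_order all_algebra.
From mathcomp Require Import all_classical all_reals all_analysis.
Set Implicit Arguments. Unset Strict Implicit. Unset Printing Implicit Defensive.
Import Order.TTheory GRing.Theory Num.Theory.
Local Open Scope classical_set_scope.
Local Open Scope ring_scope.

Section Defs.
Context {R : realType} {X : tvsType R}.

Definition dual : set (X -> R) :=
  [set l | (forall (a : R) (u v : X), l (a *: u + v) = a * l u + l v)
           /\ continuous (fun y : X => (l y : R^o))].

Definition fconvex (C : set (X -> R)) : Prop :=
  forall a b (t : R), C a -> C b -> 0 <= t <= 1 ->
    C (fun y => t * a y + (1 - t) * b y).

(* weak* closedness in X^*: the weak* topology on X^* is the subspace
   topology induced by the topology of pointwise convergence {ptws X -> R} *)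
Definition wstar_closed (C : set (X -> R)) : Prop :=
  @closure {ptws X -> R^o} C `&` dual `<=` C.

Definition wclco (A : set (X -> R)) : set (X -> R) :=
  [set l | dual l /\ forall C, A `<=` C -> C `<=` dual -> fconvex C ->
                      wstar_closed C -> C l].

Definition fscale (r : R) (A : set (X -> R)) : set (X -> R) :=
  [set (fun y => r * a y) | a in A].

Local Open Scope ereal_scope.

Definition esubdiff (g : X -> \bar R) (x : X) (e : R) : set (X -> R) :=
  [set l | dual l /\ g x \is a fin_num /\ (0 <= e)%R /\
           forall y, g x + (l (y - x)%R - e)%:E <= g y].

Definition subdiff (g : X -> \bar R) (x : X) := esubdiff g x 0.

Definition proper_fun (g : X -> \bar R) : Prop :=
  (forall y, g y != -oo) /\ exists y, g y \is a fin_num.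

Definition econvex (g : X -> \bar R) : Prop :=
  forall (x y : X) (t : R), (0 < t < 1)%R ->
    g (t *: x + (1 - t) *: y)%R <= t%:E * g x + (1 - t)%:E * g y.

Definition Gamma0 (g : X -> \bar R) : Prop :=
  proper_fun g /\ econvex g /\ lower_semicontinuous g.

Definition fplus (g : X -> \bar R) : X -> \bar R := fun y => maxe (g y) 0.

End Defs.

(* Main.v *)
Require Import Defs.
From HB Require Import structures.
From mathcomp Require Import all_boot all_order all_algebra.
From mathcomp Require Import all_classical all_reals all_analysis.
From mathcomp Require Import ring lra.
Import Order.TTheory GRing.Theory Num.Theory.
Local Open Scope classical_set_scope.
Local Open Scope ring_scope.

Section S.
Context {R : realType} {X : tvsType R}.

Lemma halfspace_closed (v : X) (c : R) :
  wstar_closed [set m : X -> R | dual m /\ m v <= c].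
Proof.
move=> m [cl dm]; split => //.
have H : closed [set m : {ptws X -> R^o} | m v <= c].
  have := @preimage_closed {ptws X -> R^o} R^o (fun m => m v) [set r | r <= c].
  apply; last exact: closed_le.
  move=> g _; exact: (@proj_continuous X (fun _ => R^o) v g).
have : closure [set m : {ptws X -> R^o} | m v <= c] m.
  by apply: (closureS _ cl) => g [].
by rewrite -(proj1 (closure_id _) H).
Qed.

Lemma dual_comb (a b : X -> R) (t : R) : dual a -> dual b ->
  dual (fun y => t * a y + (1 - t) * b y).
Proof.
move=> [la ca] [lb cb]; split.
  move=> r u v; rewrite la lb; ring.
move=> y.
apply: (@continuousD R R^o X (fun y => t * a y : R^o) (fun y => (1 - t) * b y : R^o) y).
  exact: (@continuousZl_tmp R R^o X a t y (ca y)).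
exact: (@continuousZl_tmp R R^o X b (1 - t) y (cb y)).
Qed.

Lemma dual_scale (a : X -> R) (t : R) : dual a -> dual (fun y => t * a y).
Proof.
move=> [la ca]; split.
  move=> r u v; rewrite la; ring.
move=> y; exact: (@continuousZl_tmp R R^o X a t y (ca y)).
Qed.

Lemma small_lim (u D K : R) : 0 < K ->
  (forall e, 0 < e -> e <= 1 -> u <= D + e * K) -> u <= D.
Proof.
move=> K0 H; rewrite leNgt; apply/negP => uD.
pose e := Num.min 1 ((u - D) / (2 * K)).
have e0 : 0 < e by rewrite lt_min ltr01 /= divr_gt0 // ?subr_gt0 // mulr_gt0.
have e1 : e <= 1 by rewrite ge_min lexx.
have e2 : e <= (u - D) / (2 * K) by rewrite ge_min lexx orbT.
have := H e e0 e1.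
have : e * K <= (u - D) / 2.
  rewrite -(ler_pM2r K0) in e2.
  apply: (le_trans e2); rewrite invfM -!mulrA mulVf ?gt_eqF // mulr1. 
  by rewrite mulrC.
lra.
Qed.

Local Open Scope ereal_scope.

Lemma key (f g : X -> \bar R) (x : X) (M : R) :
  (forall y, f y != -oo) -> f x \is a fin_num -> (forall y, f x <= f y) ->
  (forall y, f y \is a fin_num -> g y \is a fin_num) -> (0 <= M)%R ->
  [set l | forall e : R, (0 < e)%R ->
     wclco (esubdiff f x e `|` fscale e (esubdiff g x (e + M))) l]
  `<=` subdiff f x.
Proof.
move=> nm fxfin Hmin gfin M0 l Hl.
have dl : dual l by have [] := Hl 1%R ltr01.
split=> //; split=> //; split=> // y.
case Efy: (f y) => [r| |]; last by have := nm y; rewrite Efy.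
  2: by rewrite leey.
have gyfin : g y \is a fin_num by apply: gfin; rewrite Efy.
set a := fine (f x); have Efx : f x = a%:E by rewrite /a fineK.
set gy := fine (g y); have Egy : g y = gy%:E by rewrite /gy fineK.
set gx := fine (g x).
have Da : (a <= r)%R by have := Hmin y; rewrite Efx Efy lee_fin.
set v := (y - x)%R.
set K := (1 + `|gy - gx| + 1 + M)%R.
have K0 : (0 < K)%R by rewrite /K; have := normr_ge0 (gy - gx)%R; lra.
suff : (l v <= r - a)%R by rewrite Efx -EFinD lee_fin; lra.
apply: (@small_lim (l v) (r - a)%R K K0) => e e0 e1.
have [_ H] := Hl e e0.
pose c := (r - a + e * K)%R.
have : [set m | dual m /\ (m v <= c)%R] l; last by case.
apply: H.
- move=> m [[dm [_ [_ Hm]]]|[n [dn [gxf [_ Hn]]] <-]].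
    split=> //; have := Hm y; rewrite Efx Efy -EFinD lee_fin => h.
    have : (e <= e * K)%R by rewrite ler_peMr ?ltW // /K; have := normr_ge0 (gy - gx)%R; lra.
    rewrite /c; lra.
  split; first exact: dual_scale.
  have Egx : g x = gx%:E by rewrite /gx fineK.
  have := Hn y; rewrite Egx Egy -EFinD lee_fin => h.
  have h2 : (n v <= K)%R.
    have := ler_norm (gy - gx)%R; rewrite /K /v; lra.
  have : (e * n v <= e * K)%R by rewrite ler_pM2l.
  rewrite /c; lra.
- by move=> m [].
- move=> m1 m2 t [d1 h1] [d2 h2] /andP[t0 t1]; split; first exact: dual_comb.
  rewrite /=; nra.
- exact: halfspace_closed.
Qed.

Lemma sub_easy (f g : X -> \bar R) (x : X) (M : R) :
  subdiff f x `<=` [set l | forall e : R, (0 < e)%R ->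
     wclco (esubdiff f x e `|` fscale e (esubdiff g x (e + M))) l].
Proof.
move=> l [dl [fxfin [_ H]]] e e0; split=> // C hAC _ _ _; apply: hAC; left.
split=> //; split=> //; split; first exact: ltW.
move=> y; apply: le_trans (H y).
rewrite -(fineK fxfin) -!EFinD lee_fin; lra.
Qed.

End S.

Theorem lemma1 (R : realType) (X : tvsType R) (f : X -> \bar R) (x : X) :
  hausdorff_space X ->
  Gamma0 f ->
  (forall y, (f x <= f y)%E) ->
  forall M : R, 0 <= M ->
    subdiff f x =
      [set l | forall e : R, 0 < e ->
         wclco (esubdiff f x e `|` fscale e (esubdiff f x (e + M))) l]
    /\
    [set l | forall e : R, 0 < e ->
       wclco (esubdiff f x e `|` fscale e (esubdiff f x (e + M))) l] =
      [set l | forall e : R, 0 < e ->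
         wclco (esubdiff f x e `|` fscale e (esubdiff (fplus f) x (e + M))) l].
Proof.
move=> _ [[nm [y0 fy0]] _] Hmin M M0.
have fxfin : f x \is a fin_num.
  rewrite fin_numE nm /=; apply/negP => /eqP fx.
  by have := Hmin y0; rewrite fx leye_eq => /eqP e; rewrite e in fy0.
have gf : forall y, f y \is a fin_num -> fplus f y \is a fin_num.
  move=> y fy; rewrite /fplus maxEle; by case: ifP.
have E1 : subdiff f x = [set l | forall e : R, 0 < e ->
         wclco (esubdiff f x e `|` fscale e (esubdiff f x (e + M))) l].
  apply/seteqP; split; first exact: sub_easy.
  exact: key.
have E2 : subdiff f x = [set l | forall e : R, 0 < e ->
         wclco (esubdiff f x e `|` fscale e (esubdiff (fplus f) x (e + M))) l].
  apply/seteqP; split; first exact: sub_easy.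
  exact: key.
by split; rewrite -?E1 -?E2.
Qed.
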